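(* Consider the generalized trimmed lasso problem $$\min_{x_0,\ldots,x_L}\ f(x_0,\ldots,x_L)+\sum_{l=1}^L\gamma_l T_{K_l,m_l,p_l}(D_lx_l-c_l),$$ where $f:\mathbb{R}^{n_0+\cdots+n_L}\to\mathbb{R}$ is directionally differentiable and Lipschitz continuous with constant $M$ with respect to the $\ell_2$ norm, and suppose that for every $l\in[L]$ there is $\overline{x}_l$ with $D_l\overline{x}_l=c_l$. Then every d-stationary point $x^*$ satisfies $T_{K_l,m_l,p_l}(D_lx_l^*-c_l)=0$ for all $l\in[L]$ provided $\gamma_l>M/\sigma_{K_l,m_l,p_l}(D_l)$ for all $l\in[L]$. If moreover $p_l=1$, $D_l=I$, $c_l=0$ for all $l\in[L]$ and $f$ is Lipschitz continuous with constant $M'$ with respect to the $\ell_1$ norm, the threshold may be replaced by $\gamma_l>M'$.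
   Context: Trimmed $\ell_1$ norm: $T_{K,m,p}(z)=\min_{\Lambda\subset[m],|\Lambda|=m-K}\sum_{i\in\Lambda}\|z_i\|_2$ for $z=(z_1^\top,\ldots,z_m^\top)^\top$, $z_i\in\mathbb{R}^p$, $K\in\{0,\ldots,m-1\}$. Data: $n_0\ge0$, $\gamma_l>0$, $K_l\in\{0,\ldots,m_l-1\}$, $c_l\in\mathbb{R}^{m_lp_l}$, $D_l\ne0$ an $m_lp_l\times n_l$ matrix. d-stationary: directional derivative of the objective at $x^*$ is $\ge0$ in every direction. $\sigma_{\min}(A)$ = smallest nonzero singular value. For $D$ with $p\times n$ blocks and $(D)_\Lambda$ the submatrix of blocks indexed by $\Lambda$: $\sigma_{K,m,p}(D)=\sigma_{\min}(D)$ if $D$ is surjective, else $\min\{\sigma_{\min}((D)_\Lambda)\mid \Lambda\subset[m],|\Lambda|=m-K,(D)_\Lambda\ne0\}$. *)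

(* Defs.v *)
From HB Require Import structures.
From mathcomp Require Import all_boot all_order all_algebra.
From mathcomp Require Import all_classical all_reals all_analysis.
Set Implicit Arguments. Unset Strict Implicit. Unset Printing Implicit Defensive.
Import Order.TTheory GRing.Theory Num.Theory.
Import numFieldNormedType.Exports.
Local Open Scope classical_set_scope.
Local Open Scope ring_scope.

(* A vector z in R^(m p) is split into m consecutive blocks z_1..z_m of
   size p; the j-th entry of block i is z (mxvec_index i j) 0, i.e. the
   entry of (0-based) index i*p + j. *)
Definition blk {R : realType} (m p : nat) (z : 'cV[R]_(m * p)) (i : 'I_m)
  (j : 'I_p) : R := z (mxvec_index i j) ord0.

Definition blk_norm {R : realType} (m p : nat) (z : 'cV[R]_(m * p))
  (i : 'I_m) : R := Num.sqrt (\sum_(j < p) (blk z i j) ^+ 2).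

(* Trimmed l1 norm  T_{K,m,p}(z) = min_{|Lambda| = m - K} sum_{i in Lambda} ||z_i||_2
   (the minimum over a finite nonempty set, written as its infimum). *)
Definition trimmed {R : realType} (K m p : nat) (z : 'cV[R]_(m * p)) : R :=
  inf [set (\sum_(i in Lam) blk_norm z i) | Lam in
        [set Lam : {set 'I_m} | #|Lam| = (m - K)%N]].

Definition sigma_min {R : realType} (r n : nat) (A : 'M[R]_(r, n)) : R :=
  inf [set Num.sqrt a | a in [set a : R | eigenvalue (A^T *m A) a /\ a != 0]].

(* (D)_Lambda : the rows of the blocks indexed by Lambda, represented by
   zeroing all other block-rows of D (zero rows do not change A^T A, hence
   not the nonzero singular values, nor whether the submatrix is 0). *)
Definition blk_sub {R : realType} (m p n : nat) (D : 'M[R]_(m * p, n))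
  (Lam : {set 'I_m}) : 'M[R]_(m * p, n) :=
  \matrix_(r, c) (if [exists i in Lam, exists j : 'I_p, r == mxvec_index i j]
                  then D r c else 0).

Definition surjective_mx {R : realType} (r n : nat) (D : 'M[R]_(r, n)) :=
  forall y : 'cV[R]_r, exists x : 'cV[R]_n, D *m x = y.

Definition sigmaK {R : realType} (K m p n : nat) (D : 'M[R]_(m * p, n)) : R :=
  if `[< surjective_mx D >] then sigma_min D
  else inf [set sigma_min (blk_sub D Lam) | Lam in
        [set Lam : {set 'I_m} | #|Lam| = (m - K)%N /\ blk_sub D Lam != 0]].

Definition vars (R : realType) (L : nat) (n : 'I_L.+1 -> nat) :=
  forall l : 'I_L.+1, 'cV[R]_(n l).

Definition vadd {R : realType} {L : nat} {n : 'I_L.+1 -> nat}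
  (x : vars R n) (t : R) (d : vars R n) : vars R n :=
  fun l => x l + t *: d l.

Definition norm2 {R : realType} {L : nat} {n : 'I_L.+1 -> nat}
  (x : vars R n) : R :=
  Num.sqrt (\sum_(l < L.+1) \sum_(i < n l) (x l i ord0) ^+ 2).

Definition norm1 {R : realType} {L : nat} {n : 'I_L.+1 -> nat}
  (x : vars R n) : R :=
  \sum_(l < L.+1) \sum_(i < n l) `|x l i ord0|.

Definition dquot {R : realType} {L : nat} {n : 'I_L.+1 -> nat}
  (F : vars R n -> R) (x d : vars R n) (t : R) : R :=
  (F (vadd x t d) - F x) / t.

Definition has_dirder {R : realType} {L : nat} {n : 'I_L.+1 -> nat}
  (F : vars R n -> R) (x d : vars R n) (v : R) : Prop :=
  dquot F x d @ 0^'+ --> v.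

Definition dir_differentiable {R : realType} {L : nat} {n : 'I_L.+1 -> nat}
  (F : vars R n -> R) : Prop :=
  forall x d : vars R n, exists v : R, has_dirder F x d v.

Definition d_stationary {R : realType} {L : nat} {n : 'I_L.+1 -> nat}
  (F : vars R n -> R) (x : vars R n) : Prop :=
  forall d : vars R n, exists v : R, has_dirder F x d v /\ 0 <= v.

(* The generalized trimmed lasso objective; the l-th term (l < L, i.e. the
   paper's l+1) acts on x_(l+1) = x (lift ord0 l). *)
Definition objective {R : realType} {L : nat} {n : 'I_L.+1 -> nat}
  (f : vars R n -> R) (gam : 'I_L -> R) (K m p : 'I_L -> nat)
  (D : forall l : 'I_L, 'M[R]_(m l * p l, n (lift ord0 l)))
  (c : forall l : 'I_L, 'cV[R]_(m l * p l)) (x : vars R n) : R :=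
  f x + \sum_(l < L) gam l * @trimmed R (K l) (m l) (p l) (D l *m x (lift ord0 l) - c l).

(* Main.v *)
Require Import Defs.
From HB Require Import structures.
From mathcomp Require Import all_boot all_order all_algebra.
From mathcomp Require Import all_classical all_reals all_analysis.
From mathcomp Require Import complex spectral sesquilinear.
From mathcomp Require Import ring lra.
Import Order.TTheory GRing.Theory Num.Theory.
Import numFieldNormedType.Exports.
Set Implicit Arguments. Unset Strict Implicit. Unset Printing Implicit Defensive.
Local Open Scope classical_set_scope.
Local Open Scope ring_scope.

Section S.
Local Open Scope sesquilinear_scope.
Variable R : rcfType.
Local Notation C := R[i].
Local Notation f := (real_complex R).
Lemma creal_real (x : R) : (f x) \is Num.real.
Proof. by rewrite realE !lecR ?(le_total 0 x). Qed.
Lemma real_creal (x : C) : x \is Num.real -> x = f (complex.Re x).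
Proof.
case: x => a b; rewrite realE !lecE /= => /orP[]/andP[/eqP bE _]; first by rewrite bE.
by rewrite -bE.
Qed.
Lemma eig_map n (S : 'M[R]_n) b : eigenvalue (map_mx f S) (f b) = eigenvalue S b.
Proof. by rewrite !eigenvalue_root_char -map_char_poly fmorph_root. Qed.

Lemma sq_sum_ge0 n (v : 'rV[R]_n) : 0 <= (v *m v^T) 0 0.
Proof. by rewrite mxE; apply: sumr_ge0 => j _; rewrite mxE -expr2 sqr_ge0. Qed.

Lemma sq_sum_gt0 n (v : 'rV[R]_n) : v != 0 -> 0 < (v *m v^T) 0 0.
Proof.
move=> vn0; rewrite lt_def sq_sum_ge0 andbT; apply: contra vn0 => /eqP.
rewrite mxE => /eqP; rewrite psumr_eq0 => [/allP H|j _]; last first.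
  by rewrite mxE -expr2 sqr_ge0.
apply/eqP/rowP => j; rewrite !mxE; have := H j (mem_index_enum _).
by rewrite mxE -expr2 sqrf_eq0 => /eqP.
Qed.

Lemma psd_eig k n (B : 'M[R]_(k, n)) a : eigenvalue (B^T *m B) a -> 0 <= a.
Proof.
move=> /eigenvalueP [v hv vn0].
have : (v *m (B^T *m B) *m v^T) 0 0 = a * (v *m v^T) 0 0.
  by rewrite hv -scalemxAl mxE.
rewrite mulmxA -mulmxA -{2}(trmxK B) -trmx_mul => E.
have := sq_sum_ge0 (v *m B^T); rewrite E pmulr_lge0 //; exact: sq_sum_gt0.
Qed.

Lemma spec_key k n (B : 'M[R]_(k, n)) (S := B^T *m B) :
  exists a : R, [/\ 0 < a, (S != 0 -> eigenvalue S a),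
     (forall b, eigenvalue S b -> b != 0 -> a <= b) &
     forall u : 'rV_n, a * ((u *m S) *m (u *m S)^T) 0 0
                        <= ((u *m S) *m S *m (u *m S)^T) 0 0].
Proof.
have Ssym : S^T = S by rewrite /S trmx_mul trmxK.
pose Sc := map_mx f S.
have Scsym : Sc \is symmetricmx.
  apply/is_hermitianmxP; rewrite expr0 scale1r map_mx_id // map_trmx Ssym //.
have Screal : Sc \is a realmx by apply/mxOverP => i j; rewrite mxE creal_real.
have Scherm := realsym_hermsym Scsym Screal.
have /orthomx_spectralP hS := hermitian_normalmx Scherm.
move: hS; set P := spectralmx Sc; set d := spectral_diag Sc => hS.
have Pu : P \is unitarymx := spectral_unitarymx Sc.
have PPt : P *m P^t* = 1%:M := unitarymxP Pu.
have iP : invmx P = P^t* := invmx_unitary Pu.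
have PtP : P^t* *m P = 1%:M by rewrite -iP mulVmx // unitarymx_unit.
rewrite iP in hS.
have dreal : d \is a realmx := hermitian_spectral_diag_real Scherm.
pose dR j := complex.Re (d 0 j).
have dE j : d 0 j = f (dR j) := real_creal (mxOverP dreal 0 j).
have row1d j : row j (1%:M : 'M[C]_n) *m diag_mx d = d 0 j *: row j 1%:M.
  apply/rowP => i; rewrite mul_mx_diag !mxE.
  by case: (eqVneq j i) => [->|_]; rewrite ?mulr1 ?mulr0 ?mul1r ?mul0r.
have eigd j : eigenvalue S (dR j).
  rewrite -eig_map -dE -/Sc; apply/eigenvalueP; exists (row j P).
    by rewrite hS !mulmxA -row_mul PPt row1d -scalemxAl -row_mul mul1mx.
  apply/negP => /eqP h; have := congr1 (fun M => M *m P^t*) h.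
  rewrite -row_mul PPt mul0mx => /rowP /(_ j); rewrite !mxE eqxx => /eqP.
  by rewrite oner_eq0.
have deig b : eigenvalue S b -> exists j, dR j = b.
  rewrite -eig_map -/Sc => /eigenvalueP [v hv vn0].
  pose g := v *m P^t*.
  have hg : g *m diag_mx d = f b *: g.
    have := congr1 (fun M => M *m P^t*) hv; rewrite hS /g -scalemxAl => <-.
    by rewrite !mulmxA -!(mulmxA _ P) PPt mulmx1.
  have gn0 : g != 0.
    apply: contra vn0 => /eqP g0; apply/eqP.
    by rewrite -[v]mulmx1 -PtP mulmxA -/g g0 mul0mx.
  clearbody g.
  have /existsP [j gj] : [exists j, g 0 j != 0].
    apply: contraR gn0; rewrite negb_exists => /forallP H.
    apply/eqP; apply/rowP => j; rewrite [X in _ = X]mxE; apply/eqP; have := H j; by rewrite negbK.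
  exists j; apply: (@complexI R); rewrite -dE.
  have /rowP /(_ j) := hg; rewrite mul_mx_diag !mxE.
  rewrite [b%:C%C * _]mulrC; exact: (mulfI gj).
have hineq a : (forall j, dR j != 0 -> a <= dR j) -> forall u : 'rV_n,
    a * ((u *m S) *m (u *m S)^T) 0 0 <= ((u *m S) *m S *m (u *m S)^T) 0 0.
  move=> ha u; clearbody S; rewrite -lecR rmorphM /=.
  have mE m1 m2 (M : 'M[R]_(m1, m2)) i j : f (M i j) = (map_mx f M) i j by rewrite mxE.
  rewrite !mE !map_mxM -!map_trmx !map_mxM -/Sc.
  pose g := map_mx f u *m P^t*; pose h := g *m diag_mx d.
  have wcE : map_mx f u *m Sc = h *m P by rewrite hS /h /g !mulmxA.
  have wcT : (map_mx f u *m Sc)^T = (map_mx f u *m Sc)^t*.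
    rewrite -map_mxM; apply/matrixP => i j; rewrite !mxE conj_Creal //.
    exact: creal_real.
  rewrite wcT wcE.
  have tE : (h *m P)^t* = P^t* *m h^t* by rewrite trmx_mul map_mxM.
  rewrite tE.
  have -> : h *m P *m (P^t* *m h^t*) = h *m h^t*.
    by rewrite mulmxA -(mulmxA h) PPt mulmx1.
  have -> : h *m P *m Sc *m (P^t* *m h^t*) = h *m diag_mx d *m h^t*.
    by rewrite hS !mulmxA -(mulmxA h) PPt mulmx1 -!(mulmxA _ P) PPt mulmx1.
  rewrite !mxE mulr_sumr; apply: ler_sum => j _.
  have htE : (h^t*) j 0 = (h 0 j)^* by rewrite !mxE.
  rewrite htE mul_mx_diag [(\matrix_(_, _) _) 0 j]mxE.
  have hE : h 0 j = g 0 j * d 0 j by rewrite /h mul_mx_diag mxE.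
  case: (eqVneq (dR j) 0) => [dj0|djn0].
    by rewrite hE dE dj0 rmorph0 !mulr0 ?rmorph0 ?mulr0 ?mul0r.
  rewrite mulrAC [X in X <= _]mulrC ler_wpM2l //; first by rewrite mul_conjC_ge0.
  by rewrite dE lecR ha.
case: (boolP [exists j, dR j != 0]) => [/existsP [j1 hj1]|].
  case: (@arg_minP _ _ _ j1 (fun j => dR j != 0) dR hj1) => j0 hj0 hmin.
  exists (dR j0); split.
  - by rewrite lt_def hj0 (psd_eig (eigd j0)).
  - by move=> _; exact: eigd.
  - by move=> b /deig [j <-] hj; apply: hmin.
  - by apply: hineq => j hj; apply: hmin.
rewrite negb_exists => /forallP H0.
have d0 : d = 0.
  by apply/rowP => j; rewrite dE mxE; move: (H0 j); rewrite negbK => /eqP ->.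
have S0 : S = 0.
  apply/eqP; rewrite -(map_mx_eq0 f) -/Sc hS d0.
  by rewrite (_ : diag_mx 0 = 0) ?mulmx0 ?mul0mx //; apply/matrixP => i j; rewrite !mxE mul0rn.
exists 1; split => //.
- by rewrite S0 eqxx.
- by move=> b /deig [j <-]; move: (H0 j); rewrite negbK => /eqP ->; rewrite eqxx.
- by move=> u; rewrite S0 !mulmx0 !mul0mx !mxE mulr0.
Qed.
End S.

Section T.
Variable R : realType.

Lemma mmT0 p q (C : 'M[R]_(p, q)) : C *m C^T = 0 -> C = 0.
Proof.
move=> h; apply/row_matrixP => i; rewrite row0; apply/eqP.
apply: contraT => hn; have := sq_sum_gt0 hn.
have -> : (row i C *m (row i C)^T) 0 0 = (C *m C^T) i i.
  by rewrite !mxE; apply: eq_bigr => k _; rewrite !mxE.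
by rewrite h mxE ltxx.
Qed.

Lemma RS k n (B : 'M[R]_(k, n)) : (B^T <= B *m B^T)%MS.
Proof.
have h1 : (B *m B^T <= B^T)%MS by apply: submxMl.
have hC : (B :&: kermx B^T)%MS = 0.
  apply: mmT0.
  have /submxP [D hD] : ((B :&: kermx B^T) <= B)%MS by apply: capmxSl.
  have /sub_kermxP hK : ((B :&: kermx B^T) <= kermx B^T)%MS by apply: capmxSr.
  by rewrite [X in _ *m X^T]hD trmx_mul mulmxA hK mul0mx.
have := mxrank_mul_ker B B^T; rewrite hC mxrank0 addn0 => hr.
by rewrite -(mxrank_leqif_sup h1).2 hr mxrank_tr.
Qed.

Definition vn n (v : 'cV[R]_n) : R := Num.sqrt (\sum_i (v i 0) ^+ 2).

Lemma vnE n (v : 'cV[R]_n) : vn v = Num.sqrt ((v^T *m v) 0 0).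
Proof. by rewrite /vn mxE; congr Num.sqrt; apply: eq_bigr => i _; rewrite mxE expr2. Qed.

Lemma AT0 r n (A : 'M[R]_(r, n)) : A != 0 -> A^T *m A != 0.
Proof.
move=> An0; apply/negP => /eqP h; move/negP: An0; apply; apply/eqP.
apply: trmx_inj; rewrite trmx0; apply: mmT0; by rewrite trmxK.
Qed.

Lemma sigma_eq r n (A : 'M[R]_(r, n)) a :
  0 < a -> eigenvalue (A^T *m A) a ->
  (forall b, eigenvalue (A^T *m A) b -> b != 0 -> a <= b) ->
  sigma_min A = Num.sqrt a.
Proof.
move=> a0 ea amin; rewrite /sigma_min; apply/le_anti/andP; split.
  apply: ge_inf; last by exists a => //; split => //; rewrite gt_eqF.
  exists 0 => y [x _ <-]; exact: sqrtr_ge0.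
apply: lb_le_inf; first by exists (Num.sqrt a), a => //; split => //; rewrite gt_eqF.
by move=> y [x [ex xn0] <-]; rewrite ler_sqrt ?amin // (le_trans (ltW a0)) ?amin.
Qed.

Lemma sigma_pos r n (A : 'M[R]_(r, n)) : A != 0 -> 0 < sigma_min A.
Proof.
move=> An0; have [a [a0 ea amin _]] := spec_key A.
by rewrite (sigma_eq a0 (ea (AT0 An0)) amin) sqrtr_gt0.
Qed.

Lemma sigma_bound r n (A : 'M[R]_(r, n)) (x0 : 'cV[R]_n) :
  exists w, A *m w = A *m x0 /\ sigma_min A * vn w <= vn (A *m x0).
Proof.
set y := A *m x0.
case: (eqVneq y 0) => [y0|yn0].
  exists 0; rewrite mulmx0 y0; split => //.
  by rewrite /vn big1 ?sqrtr0 ?mulr0 // => i _; rewrite mxE expr0n.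
have An0 : A != 0 by apply: contra yn0 => /eqP A0; rewrite /y A0 mul0mx.
have [a [a0 ea amin hin]] := spec_key A.
have sE := sigma_eq a0 (ea (AT0 An0)) amin.
have hy : (y^T <= A *m A^T)%MS.
  apply: submx_trans (RS A); rewrite /y trmx_mul; exact: submxMl.
pose g := y^T *m pinvmx (A *m A^T).
have hg : g *m (A *m A^T) = y^T by apply: mulmxKpV.
pose v := g *m A.
have hvA : v *m A^T = y^T by rewrite /v -mulmxA.
have hv : (v <= A^T *m A)%MS.
  apply: submx_trans (submxMl g A) _; have := RS A^T; rewrite trmxK; apply.
have hu : v *m pinvmx (A^T *m A) *m (A^T *m A) = v by apply: mulmxKpV.
exists v^T; split.
  by rewrite -[A]trmxK -trmx_mul hvA trmxK.
have := hin (v *m pinvmx (A^T *m A)); rewrite hu.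
have -> : v *m (A^T *m A) *m v^T = y^T *m y.
  by rewrite mulmxA hvA -mulmxA -[A]trmxK -trmx_mul hvA !trmxK.
move=> hle; rewrite sE !vnE trmxK -sqrtrM; [exact: ler_wsqrtr | exact: ltW].
Qed.

End T.

Section U.
Variable R : realType.

Lemma sum_mxvec m p (F : 'I_(m * p) -> R) :
  \sum_r F r = \sum_i \sum_j F (mxvec_index i j).
Proof.
rewrite (reindex _ (curry_mxvec_bij _ _)) /= pair_bigA.
by apply: eq_bigr => [[i j]].
Qed.

Lemma mxvec_index_inj m p (i i' : 'I_m) (j j' : 'I_p) :
  mxvec_index i j = mxvec_index i' j' -> i = i' /\ j = j'.
Proof.
by move/cast_ord_inj/enum_rank_inj => [-> ->].
Qed.

Definition inL m p (Lam : {set 'I_m}) (r : 'I_(m * p)) :=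
  [exists i in Lam, exists j : 'I_p, r == mxvec_index i j].

Lemma inL_idx m p (Lam : {set 'I_m}) i j :
  inL Lam (mxvec_index i (j : 'I_p)) = (i \in Lam).
Proof.
apply/existsP/idP => [[i' /andP [hi' /existsP [j' /eqP /mxvec_index_inj [-> _]]]] //|hi].
by exists i; rewrite hi /=; apply/existsP; exists j.
Qed.

Definition mask m p (Lam : {set 'I_m}) (z : 'cV[R]_(m * p)) : 'cV[R]_(m * p) :=
  \col_r (if inL Lam r then z r 0 else 0).

Lemma blk_subM m p n (D : 'M[R]_(m * p, n)) Lam (x : 'cV[R]_n) :
  blk_sub D Lam *m x = mask Lam (D *m x).
Proof.
apply/colP => r; rewrite !mxE /inL /blk_sub; case: ifP => h.
  by apply: eq_bigr => c _; rewrite mxE h.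
by rewrite big1 // => c _; rewrite mxE h mul0r.
Qed.

Lemma blk_norm_ge0 m p (z : 'cV[R]_(m * p)) i : 0 <= blk_norm z i.
Proof. exact: sqrtr_ge0. Qed.

Lemma card_exists m k : (k <= m)%N -> exists Lam : {set 'I_m}, #|Lam| = k.
Proof.
move=> hk; exists [set widen_ord hk i | i : 'I_k].
rewrite card_imset ?card_ord // => a b /(congr1 val) h; exact: val_inj.
Qed.

Lemma trimmed_le K m p (z : 'cV[R]_(m * p)) (Lam : {set 'I_m}) : #|Lam| = (m - K)%N ->
  trimmed K z <= \sum_(i in Lam) blk_norm z i.
Proof.
move=> hL; rewrite /trimmed; apply: ge_inf; last by exists Lam.
exists 0 => y [L' _ <-]; apply: sumr_ge0 => i _; exact: blk_norm_ge0.
Qed.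

Lemma trimmed_ge0 K m p (z : 'cV[R]_(m * p)) : 0 <= trimmed K z.
Proof.
have [Lam hL] := card_exists (leq_subr K m).
rewrite /trimmed; apply: lb_le_inf; first by exists (\sum_(i in Lam) blk_norm z i), Lam.
move=> y [L' _ <-]; apply: sumr_ge0 => i _; exact: blk_norm_ge0.
Qed.

Lemma trimmed_att K m p (z : 'cV[R]_(m * p)) : exists Lam : {set 'I_m},
  #|Lam| = (m - K)%N /\ trimmed K z = \sum_(i in Lam) blk_norm z i.
Proof.
have [L0 hL0] := card_exists (leq_subr K m).
have hL0' : (fun L : {set 'I_m} => #|L| == (m - K)%N) L0 by rewrite /= hL0.
case: (@arg_minP _ _ _ L0 (fun L : {set 'I_m} => #|L| == (m - K)%N)
   (fun L => \sum_(i in L) blk_norm z i) hL0') => L1 /eqP hL1 hmin.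
exists L1; split => //; apply/le_anti/andP; split; first exact: trimmed_le.
rewrite /trimmed; apply: lb_le_inf; first by exists (\sum_(i in L1) blk_norm z i), L1.
by move=> y [L' /= hL' <-]; apply: hmin; rewrite hL'.
Qed.

Lemma vnN n (v : 'cV[R]_n) : vn (- v) = vn v.
Proof. by rewrite /vn; congr Num.sqrt; apply: eq_bigr => i _; rewrite mxE sqrrN. Qed.

Lemma sq_sum_le (I : finType) (P : pred I) (F : I -> R) : (forall i, P i -> 0 <= F i) ->
  \sum_(i | P i) F i ^+ 2 <= (\sum_(i | P i) F i) ^+ 2.
Proof.
move=> h0; rewrite expr2 mulr_suml; apply: ler_sum => i hi.
rewrite expr2 ler_wpM2l ?h0 // (bigD1 i hi) /= lerDl; apply: sumr_ge0 => k /andP [hk _].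
exact: h0.
Qed.

Lemma vn_mask m p (z : 'cV[R]_(m * p)) (Lam : {set 'I_m}) :
  vn (mask Lam z) <= \sum_(i in Lam) blk_norm z i.
Proof.
have -> : vn (mask Lam z) = Num.sqrt (\sum_(i in Lam) blk_norm z i ^+ 2).
  rewrite /vn sum_mxvec; congr Num.sqrt.
  rewrite (bigID (mem Lam)) /= [X in _ + X]big1 ?addr0 => [|i hi].
    apply: eq_bigr => i hi; rewrite sqr_sqrtr; last first.
      by apply: sumr_ge0 => j _; rewrite sqr_ge0.
    by apply: eq_bigr => j _; rewrite mxE inL_idx hi.
  by apply: big1 => j _; rewrite mxE inL_idx (negbTE hi) expr0n.
have hS : 0 <= \sum_(i in Lam) blk_norm z i by apply: sumr_ge0 => i _; exact: blk_norm_ge0.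
rewrite -(ger0_norm hS) -sqrtr_sqr; apply: ler_wsqrtr; apply: sq_sum_le => i _.
exact: blk_norm_ge0.
Qed.

Lemma trimmed_step K m p (z e : 'cV[R]_(m * p)) (Lam : {set 'I_m}) t :
  #|Lam| = (m - K)%N -> trimmed K z = \sum_(i in Lam) blk_norm z i ->
  (forall i j, i \in Lam -> blk e i j = - blk z i j) -> 0 <= t <= 1 ->
  trimmed K (z + t *: e) <= (1 - t) * trimmed K z.
Proof.
move=> hL hT he /andP [t0 t1]; apply: le_trans (trimmed_le _ hL) _.
rewrite hT mulr_sumr; apply: ler_sum => i hi.
have h1t : 0 <= 1 - t by rewrite subr_ge0.
rewrite /blk_norm -(ger0_norm h1t) -sqrtr_sqr -sqrtrM ?sqr_ge0 // mulr_sumr.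
rewrite le_eqVlt; apply/orP; left; apply/eqP; congr Num.sqrt; apply: eq_bigr => j _.
rewrite -exprMn /blk !mxE; congr (_ ^+ 2).
have := he i j hi; rewrite /blk => ->; rewrite mulrN mulrBl mul1r.
by rewrite mulrC.
Qed.

End U.

Section V.
Variables (R : realType) (L : nat) (n : 'I_L.+1 -> nat).

Definition dirv (k0 : 'I_L.+1) (w : 'cV[R]_(n k0)) : vars R n :=
  fun k => match k0 =P k with ReflectT e => ecast kk ('cV[R]_(n kk)) e w | ReflectF _ => 0 end.

Lemma dirv_self k0 (w : 'cV[R]_(n k0)) : dirv w k0 = w.
Proof. by rewrite /dirv; case: eqP => // e; rewrite (eq_axiomK e). Qed.

Lemma dirv_other k0 (w : 'cV[R]_(n k0)) k : k0 != k -> dirv w k = 0.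
Proof. by rewrite /dirv; case: eqP. Qed.

Lemma norm2_supp (y : vars R n) k0 : (forall k, k0 != k -> y k = 0) ->
  norm2 y = vn (y k0).
Proof.
move=> h; rewrite /norm2 (bigD1 k0) //= [X in _ + X]big1 ?addr0 // => k hk.
by apply: big1 => i _; rewrite h 1?eq_sym // mxE expr0n.
Qed.

Lemma norm1_supp (y : vars R n) k0 : (forall k, k0 != k -> y k = 0) ->
  norm1 y = \sum_i `|y k0 i 0|.
Proof.
move=> h; rewrite /norm1 (bigD1 k0) //= [X in _ + X]big1 ?addr0 // => k hk.
by apply: big1 => i _; rewrite h 1?eq_sym // mxE normr0.
Qed.

Lemma vadd_dirv (x : vars R n) k0 (w : 'cV[R]_(n k0)) t k :
  vadd (vadd x t (dirv w)) (-1) x k = t *: dirv w k.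
Proof. by rewrite /vadd scaleN1r addrAC subrr add0r. Qed.

Lemma core (f : vars R n -> R) (gam : 'I_L -> R) (K m p : 'I_L -> nat)
  (D : forall l : 'I_L, 'M[R]_(m l * p l, n (lift ord0 l)))
  (c : forall l : 'I_L, 'cV[R]_(m l * p l)) (xs : vars R n) (l : 'I_L)
  (w : 'cV[R]_(n (lift ord0 l))) (Nd : R) (Lam : {set 'I_(m l)}) :
  d_stationary (objective f gam K D c) xs ->
  0 < gam l ->
  (forall t, 0 < t -> `|f (vadd xs t (dirv w)) - f xs| <= t * Nd) ->
  #|Lam| = (m l - K l)%N ->
  trimmed (K l) (D l *m xs (lift ord0 l) - c l) =
    \sum_(i in Lam) blk_norm (D l *m xs (lift ord0 l) - c l) i ->
  (forall i j, i \in Lam ->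
     blk (D l *m w) i j = - blk (D l *m xs (lift ord0 l) - c l) i j) ->
  Nd < gam l * trimmed (K l) (D l *m xs (lift ord0 l) - c l) -> False.
Proof.
move=> hst g0 hf hL hT he hN.
set z := D l *m xs (lift ord0 l) - c l in hT he hN.
set tau := trimmed (K l) z in hT hN.
have [v [hv v0]] := hst (dirv w).
have hle : \forall t \near 0^'+,
    dquot (objective f gam K D c) xs (dirv w) t <= Nd - gam l * tau.
  near=> t.
  have t0 : 0 < t by near: t; exact: nbhs_right_gt.
  have t1 : t < 1 by near: t; apply: nbhs_right_lt; exact: ltr01.
  rewrite /dquot ler_pdivrMr //.
  rewrite /objective (bigD1 l) //= [X in _ - (_ + X)](bigD1 l) //=.
  have -> : \sum_(i < L | i != l) gam i * trimmed (K i)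
      (D i *m vadd xs t (dirv w) (lift ord0 i) - c i) =
      \sum_(i < L | i != l) gam i * trimmed (K i) (D i *m xs (lift ord0 i) - c i).
    apply: eq_bigr => i hi; rewrite /vadd dirv_other ?scaler0 ?addr0 //.
    by rewrite (inj_eq lift_inj) eq_sym.
  have hz : D l *m vadd xs t (dirv w) (lift ord0 l) - c l = z + t *: (D l *m w).
    by rewrite /vadd dirv_self mulmxDr -scalemxAr addrAC.
  rewrite hz -/z -/tau.
  have hT2 : trimmed (K l) (z + t *: (D l *m w)) <= (1 - t) * tau.
    by apply: (trimmed_step hL hT he); rewrite (ltW t0) (ltW t1).
  have hg := ler_wpM2l (ltW g0) hT2.
  have hf2 := le_trans (ler_norm _) (hf t t0).
  set A := f _ in hf2 *; set B := \sum_(i < L | i != l) _.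
  set T1 := trimmed _ _ in hg *.
  have e1 : gam l * ((1 - t) * tau) = gam l * tau - t * (gam l * tau) by ring.
  have e2 : (Nd - gam l * tau) * t = t * Nd - t * (gam l * tau) by ring.
  rewrite e1 in hg; rewrite e2.
  set X := t * Nd in hf2 *; set Y := t * (gam l * tau) in hg *.
  lra.
have := cvgr_to_le hv hle; set G := gam l * tau in hN *; move=> H; have := H (at_right_proper_filter (0 : R)); lra.
Unshelve. all: by end_near.
Qed.

End V.

Section W.
Variable R : realType.

Lemma vn_ge0 n (v : 'cV[R]_n) : 0 <= vn v.
Proof. exact: sqrtr_ge0. Qed.

Lemma vnZ n (v : 'cV[R]_n) t : 0 <= t -> vn (t *: v) = t * vn v.
Proof.
move=> t0; rewrite /vn.
rewrite -[t in RHS](ger0_norm t0) -sqrtr_sqr -sqrtrM ?sqr_ge0 //.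
by congr Num.sqrt; rewrite mulr_sumr; apply: eq_bigr => i _; rewrite mxE exprMn.
Qed.

Lemma maskN m p (Lam : {set 'I_m}) (z : 'cV[R]_(m * p)) : mask Lam (- z) = - mask Lam z.
Proof. by apply/colP => r; rewrite !mxE; case: ifP; rewrite ?oppr0. Qed.

Lemma maskK m p (Lam : {set 'I_m}) (z : 'cV[R]_(m * p)) : mask Lam (mask Lam z) = mask Lam z.
Proof. by apply/colP => r; rewrite !mxE; case: (inL Lam r). Qed.

Lemma mask_blk m p (Lam : {set 'I_m}) (z : 'cV[R]_(m * p)) i j :
  i \in Lam -> blk (mask Lam z) i j = blk z i j.
Proof. by move=> hi; rewrite /blk mxE inL_idx hi. Qed.

Lemma sigmaK_pos K m p n (D : 'M[R]_(m * p, n)) (Lam : {set 'I_m}) :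
  #|Lam| = (m - K)%N -> blk_sub D Lam != 0 ->
  0 < inf [set sigma_min (blk_sub D Lam) | Lam in
        [set Lam : {set 'I_m} | #|Lam| = (m - K)%N /\ blk_sub D Lam != 0]] /\
  inf [set sigma_min (blk_sub D Lam) | Lam in
        [set Lam : {set 'I_m} | #|Lam| = (m - K)%N /\ blk_sub D Lam != 0]]
   <= sigma_min (blk_sub D Lam).
Proof.
move=> hL hA.
have hP : (fun L : {set 'I_m} => (#|L| == (m - K)%N) && (blk_sub D L != 0)) Lam.
  by rewrite /= hL eqxx hA.
case: (@arg_minP _ _ _ Lam (fun L : {set 'I_m} => (#|L| == (m - K)%N) && (blk_sub D L != 0)) (fun L => sigma_min (blk_sub D L)) hP) => L1.
move=> /andP [/eqP hL1 hA1] hmin; split.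
  apply: lt_le_trans (sigma_pos hA1) _.
  apply: lb_le_inf; first by exists (sigma_min (blk_sub D Lam)), Lam.
  by move=> y [L' [hL' hA'] <-]; apply: hmin; rewrite hL' eqxx hA'.
apply: ge_inf; last by exists Lam.
exists 0 => y [L' [hL' hA'] <-]; exact: ltW (sigma_pos hA').
Qed.

End W.

Lemma part1 (R : realType) (L : nat) (n : 'I_L.+1 -> nat)
  (gam : 'I_L -> R) (K m p : 'I_L -> nat)
  (D : forall l : 'I_L, 'M[R]_(m l * p l, n (lift ord0 l)))
  (c : forall l : 'I_L, 'cV[R]_(m l * p l))
  (f : vars R n -> R) (M : R) :
  (forall l, 0 < gam l) ->
  (forall l, D l != 0) ->
  (forall l, exists xb : 'cV[R]_(n (lift ord0 l)), D l *m xb = c l) ->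
  (forall x y : vars R n, `|f x - f y| <= M * norm2 (vadd x (-1) y)) ->
  (forall xs : vars R n,
     d_stationary (objective f gam K D c) xs ->
     (forall l, M / sigmaK (K l) (D l) < gam l) ->
     forall l, trimmed (K l) (D l *m xs (lift ord0 l) - c l) = 0).
Proof.
move=> hg hD hxb hLip xs hst hsig l.
set z := D l *m xs (lift ord0 l) - c l.
have T0 := trimmed_ge0 (K l) z.
apply/eqP; apply: contraT => hTn.
have Tpos : 0 < trimmed (K l) z by rewrite lt_def hTn T0.
have [Lam [hL hT]] := trimmed_att (K l) z.
set zL := mask Lam z.
have [sK0 [w [hw1 hw2]]] : 0 < sigmaK (K l) (D l) /\ exists w,
    mask Lam (D l *m w) = - zL /\ sigmaK (K l) (D l) * vn w <= vn zL.
  rewrite /sigmaK; case: asboolP => [hsurj|hns].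
    split; first exact: sigma_pos.
    have [x0 hx0] := hsurj (- zL).
    have [w [hw hb]] := sigma_bound (D l) x0.
    exists w; rewrite hw hx0 maskN maskK; split => //.
    by move: hb; rewrite hx0 vnN.
  have [xb hxb'] := hxb l.
  pose A := blk_sub (D l) Lam.
  have hAx : A *m (xb - xs (lift ord0 l)) = - zL.
    by rewrite /A blk_subM mulmxBr hxb' -opprB maskN.
  have hA0 : A != 0.
    apply/negP => /eqP A0; move: hTn; rewrite hT; clearbody z.
    suff -> : \sum_(i in Lam) blk_norm z i = 0 by rewrite eqxx.
    apply: big1 => i hi; rewrite /blk_norm big1 ?sqrtr0 // => j _.
    have := congr1 (fun v : 'cV[R]_(m l * p l) => v (mxvec_index i j) 0) hAx.
    rewrite A0 mul0mx !mxE inL_idx hi /= => /eqP; rewrite eq_sym oppr_eq0 => /eqP.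
    by rewrite /blk => ->; rewrite expr0n.
  have [hpos hle] := sigmaK_pos hL hA0.
  split => //.
  have [w [hw hb]] := sigma_bound A (xb - xs (lift ord0 l)).
  exists w; split; first by rewrite -blk_subM -/A hw hAx.
  rewrite hAx vnN in hb; apply: (le_trans _ hb); apply: ler_wpM2r => //; exact: vn_ge0.
have hzL : vn zL <= trimmed (K l) z by rewrite hT; exact: vn_mask.
exfalso; apply: (core (w := w) (Nd := M * vn w) (Lam := Lam) hst (hg l)) => //.
- move=> t t0; have := hLip (vadd xs t (dirv w)) xs.
  have hN2 : norm2 (vadd (vadd xs t (dirv w)) (-1) xs) = t * vn w.
    rewrite (@norm2_supp _ _ _ _ (lift ord0 l)) => [|k hk]; last first.
      by rewrite vadd_dirv dirv_other // scaler0.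
    by rewrite vadd_dirv dirv_self vnZ // ltW.
  by rewrite hN2 mulrCA.
- move=> i j hi.
  have blkN (v : 'cV[R]_(m l * p l)) : blk (- v) i j = - blk v i j by rewrite /blk mxE.
  have := congr1 (fun v => blk v i j) hw1; rewrite /= mask_blk // => ->.
  by rewrite blkN mask_blk.
- have h1 : sigmaK (K l) (D l) * vn w <= trimmed (K l) z := le_trans hw2 hzL.
  case: (lerP M 0) => hM.
    apply: (@le_lt_trans _ _ 0); last by rewrite mulr_gt0.
    by rewrite mulr_le0_ge0 ?vn_ge0.
  have -> : M * vn w = (M / sigmaK (K l) (D l)) * (sigmaK (K l) (D l) * vn w).
    by rewrite mulrA divfK ?gt_eqF.
  apply: (@le_lt_trans _ _ ((M / sigmaK (K l) (D l)) * trimmed (K l) z)).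
    by rewrite ler_wpM2l // divr_ge0 // ltW.
  by rewrite ltr_pM2r.
Qed.

Lemma sum_abs1 (R : realType) (q : nat) (F : 'I_q -> R) : q = 1%N ->
  \sum_j `|F j| = Num.sqrt (\sum_j F j ^+ 2).
Proof. by move=> hq; move: F; rewrite hq => F; rewrite !big_ord1 sqrtr_sqr. Qed.

Lemma part2 (R : realType) (L : nat) (n : 'I_L.+1 -> nat)
  (gam : 'I_L -> R) (K m p : 'I_L -> nat)
  (D : forall l : 'I_L, 'M[R]_(m l * p l, n (lift ord0 l)))
  (c : forall l : 'I_L, 'cV[R]_(m l * p l))
  (f : vars R n -> R) :
  (forall l, 0 < gam l) ->
  (forall l, p l = 1%N) ->
  (forall l, m l = n (lift ord0 l)) ->
  (forall l i j, D l i j = ((val i == val j)%:R : R)) ->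
  (forall l, c l = 0) ->
  forall M' : R,
  (forall x y : vars R n, `|f x - f y| <= M' * norm1 (vadd x (-1) y)) ->
  forall xs : vars R n,
    d_stationary (objective f gam K D c) xs ->
    (forall l, M' < gam l) ->
    forall l, trimmed (K l) (D l *m xs (lift ord0 l) - c l) = 0.
Proof.
move=> hg hp hm hDI hc M' hLip xs hst hM l.
set z := D l *m xs (lift ord0 l) - c l.
have T0 := trimmed_ge0 (K l) z.
apply/eqP; apply: contraT => hTn.
have Tpos : 0 < trimmed (K l) z by rewrite lt_def hTn T0.
have [Lam [hL hT]] := trimmed_att (K l) z.
set zL := mask Lam z.
have hr (r : 'I_(m l * p l)) : (val r < n (lift ord0 l))%N.
  change (nat_of_ord r < n (lift ord0 l))%N; move: (ltn_ord r); move: (nat_of_ord r) => k; by rewrite (hp l) muln1 hm.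
have hsum (r : 'I_(m l * p l)) : \sum_k D l r k = 1.
  rewrite (bigD1 (Ordinal (hr r))) //= big1 ?addr0 => [|k hk].
    by rewrite hDI eqxx.
  rewrite hDI; case: eqP => // e; move: hk; rewrite eqE /= e eqxx //.
have hDDT : D l *m (D l)^T = 1%:M.
  apply/matrixP => r r'; rewrite !mxE.
  rewrite (bigD1 (Ordinal (hr r))) //= big1 ?addr0 => [|k hk].
    rewrite !mxE !hDI eqxx mul1r eq_sym.
    by [].
  rewrite mxE !hDI; case: eqP => [e|]; last by rewrite mul0r.
  by move: hk; rewrite eqE /= e eqxx.
pose w := - ((D l)^T *m zL).
have hDw : D l *m w = - zL by rewrite /w mulmxN mulmxA hDDT mul1mx.
have hzL : \sum_r `|zL r 0| <= trimmed (K l) z.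
  rewrite hT sum_mxvec (bigID (mem Lam)) /= [X in _ + X]big1 ?addr0 => [|i hi]; last first.
    by apply: big1 => j _; rewrite mxE inL_idx (negbTE hi) normr0.
  apply: ler_sum => i hi; rewrite /blk_norm -(sum_abs1 _ (hp l)).
  by rewrite le_eqVlt; apply/orP; left; apply/eqP; apply: eq_bigr => j _; rewrite mxE inL_idx hi.
have Dge0 r k : 0 <= D l r k by rewrite hDI ler0n.
have hw1 : \sum_k `|w k 0| <= \sum_r `|zL r 0|.
  apply: (@le_trans _ _ (\sum_k \sum_r D l r k * `|zL r 0|)).
    apply: ler_sum => k _; rewrite mxE normrN mxE.
    apply: le_trans (ler_norm_sum _ _ _) _; apply: ler_sum => r _.
    by rewrite mxE normrM (ger0_norm (Dge0 r k)).
  rewrite exchange_big; apply: ler_sum => r _.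
  by rewrite -mulr_suml hsum mul1r.
have hW := le_trans hw1 hzL.
exfalso; apply: (core (w := w) (Nd := M' * \sum_k `|w k 0|) (Lam := Lam) hst (hg l)) => //.
- move=> t t0; have := hLip (vadd xs t (dirv w)) xs.
  have hN1 : norm1 (vadd (vadd xs t (dirv w)) (-1) xs) = t * \sum_k `|w k 0|.
    rewrite (@norm1_supp _ _ _ _ (lift ord0 l)) => [|k hk]; last first.
      by rewrite vadd_dirv dirv_other // scaler0.
    rewrite vadd_dirv dirv_self mulr_sumr; apply: eq_bigr => k _.
    by rewrite mxE normrM (gtr0_norm t0).
  by rewrite hN1 mulrCA.
- move=> i j hi.
  have blkN (v : 'cV[R]_(m l * p l)) : blk (- v) i j = - blk v i j by rewrite /blk mxE.
  by rewrite hDw blkN mask_blk.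
- case: (lerP M' 0) => hM'.
    apply: (@le_lt_trans _ _ 0); last by rewrite mulr_gt0.
    by rewrite mulr_le0_ge0 // sumr_ge0.
  apply: (@le_lt_trans _ _ (M' * trimmed (K l) z)).
    by rewrite ler_wpM2l // ltW.
  by rewrite ltr_pM2r.
Qed.

Theorem mainTheorem6 (R : realType) (L : nat) (n : 'I_L.+1 -> nat)
  (gam : 'I_L -> R) (K m p : 'I_L -> nat)
  (D : forall l : 'I_L, 'M[R]_(m l * p l, n (lift ord0 l)))
  (c : forall l : 'I_L, 'cV[R]_(m l * p l))
  (f : vars R n -> R) (M : R) :
  (forall l, 0 < gam l) ->
  (forall l, (K l < m l)%N) ->
  (forall l, D l != 0) ->
  (forall l, exists xb : 'cV[R]_(n (lift ord0 l)), D l *m xb = c l) ->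
  dir_differentiable f ->
  (forall x y : vars R n, `|f x - f y| <= M * norm2 (vadd x (-1) y)) ->
  (forall xs : vars R n,
     d_stationary (objective f gam K D c) xs ->
     (forall l, M / sigmaK (K l) (D l) < gam l) ->
     forall l, trimmed (K l) (D l *m xs (lift ord0 l) - c l) = 0)
  /\
  ((forall l, p l = 1%N) ->
   (forall l, m l = n (lift ord0 l)) ->
   (forall l i j, D l i j = ((val i == val j)%:R : R)) ->
   (forall l, c l = 0) ->
   forall M' : R,
   (forall x y : vars R n, `|f x - f y| <= M' * norm1 (vadd x (-1) y)) ->
   forall xs : vars R n,
     d_stationary (objective f gam K D c) xs ->
     (forall l, M' < gam l) ->
     forall l, trimmed (K l) (D l *m xs (lift ord0 l) - c l) = 0).
Proof.
move=> hg hK hD hxb _ hLip; split; first exact: part1.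
exact: part2.
Qed.
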